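(* Let $d,f\in\mathbb{C}$ with $f\neq 0$, and let $\tau_1:T_4\to\mathrm{GL}_5(\mathbb{C})$ be defined by $\tau_1(s_i)=\mathrm{diag}(I_{i-1},M_1,I_{3-i})$ for $1\leq i\leq 3$, where $M_1=\begin{pmatrix}1&0&0\\ d&-1&f\\ 0&0&1\end{pmatrix}$. Then $\tau_1$ has a composition factor $\tau_1^{(1)}:T_4\to\mathrm{GL}_3(\mathbb{C})$ given by $$\tau_1^{(1)}(s_1)=\begin{pmatrix}-1&f&0\\ 0&1&0\\ 0&0&1\end{pmatrix},\quad \tau_1^{(1)}(s_2)=\begin{pmatrix}1&0&0\\ d&-1&f\\ 0&0&1\end{pmatrix},\quad \tau_1^{(1)}(s_3)=\begin{pmatrix}1&0&0\\ 0&1&0\\ 0&d&-1\end{pmatrix}.$$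
   Context: The twin group $T_4$ is the group with generators $s_1,s_2,s_3$ and defining relations $s_i^2=1$ for $1\leq i\leq 3$ and $s_1s_3=s_3s_1$. $\mathrm{diag}(A,B,C)$ denotes a block-diagonal matrix and $I_r$ the $r\times r$ identity matrix ($I_0$ empty). A composition factor means a subquotient representation (quotient of an invariant subspace by a smaller invariant subspace). *)

(* Defs.v *)
From HB Require Import structures.
From mathcomp Require Import all_boot all_order all_algebra.
From mathcomp Require Import complex.
From mathcomp Require Import Rstruct.
Set Implicit Arguments. Unset Strict Implicit. Unset Printing Implicit Defensive.
Import Order.TTheory GRing.Theory Num.Theory.
Local Open Scope ring_scope.

Notation C := (complex Rdefinitions.R).

Definition mx3 {F : nzRingType} (a b c d e f g h k : F) : 'M[F]_3 :=
  \matrix_(i < 3, j < 3)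
    nth 0 (nth [::] [:: [:: a; b; c]; [:: d; e; f]; [:: g; h; k]] i) j.

(* For the paper's s_i (1 <= i <= 3) we use p = i - 1. *)
Definition diag_block3 {F : nzRingType} (n p : nat) (M : 'M[F]_3) : 'M[F]_n :=
  \matrix_(r < n, c < n)
    if (p <= r < p + 3)%N && (p <= c < p + 3)%N
    then M (inord (r - p)) (inord (c - p))
    else (r == c)%:R.

(* A representation of the twin group T_4 = < s1,s2,s3 | s_i^2 = 1,
   s1 s3 = s3 s1 > in GL_n(F) is determined by the images of the generators
   (indexed by 'I_3, index i standing for s_(i+1)); these must be invertible
   and satisfy the defining relations. *)
Definition T4_rep {F : fieldType} (n : nat) (rho : 'I_3 -> 'M[F]_n) : Prop :=
  [/\ forall i, rho i \in unitmx,
      forall i, rho i *m rho i = 1%:M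
    & rho 0 *m rho 2 = rho 2 *m rho 0].

(* Matrices act on COLUMN vectors
   v |-> rho v; subspaces of F^n are encoded (mxalgebra convention) as row
   spaces of n x n matrices, identifying a column vector with its transpose,
   so that rho-invariance of a subspace U reads  U *m rho^T <= U.
   [mx_subquotient rho sigma] says: there are rho-invariant subspaces
   W <= U of F^n and a linear map phi : F^n -> F^m (v^T |-> v^T *m phi)
   whose restriction to U is onto F^m with kernel exactly W (so it induces
   a linear isomorphism U/W ~ F^m) and which intertwines the action induced
   by rho on U/W with sigma:  phi(rho v) = sigma (phi v) for all v in U. *)
Definition mx_subquotient {F : fieldType} (n m : nat)
    (rho : 'I_3 -> 'M[F]_n) (sigma : 'I_3 -> 'M[F]_m) : Prop :=
  exists (U W : 'M[F]_n) (phi : 'M[F]_(n, m)),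
    [/\ (W <= U)%MS,
        forall i, (U *m (rho i)^T <= U)%MS,
        forall i, (W *m (rho i)^T <= W)%MS,
        row_full (U *m phi) /\
        ((U :&: kermx phi) == W)%MS
      & forall i, U *m ((rho i)^T *m phi) = U *m (phi *m (sigma i)^T)].

Definition M1 (d f : C) : 'M[C]_3 := mx3 1 0 0  d (-1) f  0 0 1.

Definition tau1 (d f : C) (i : 'I_3) : 'M[C]_5 := diag_block3 5 i (M1 d f).

Definition tau1_1 (d f : C) (i : 'I_3) : 'M[C]_3 :=
  match val i with
  | 0%N => mx3 (-1) f 0  0 1 0  0 0 1
  | 1%N => mx3 1 0 0  d (-1) f  0 0 1
  | _ => mx3 1 0 0  0 1 0  0 d (-1)
  end.

(* Main.v *)
Require Import Defs.
From HB Require Import structures.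
From mathcomp Require Import all_boot all_order all_algebra.
From mathcomp Require Import complex.
From mathcomp Require Import Rstruct.
From mathcomp Require Import ring.
Import GRing.Theory.
Local Open Scope ring_scope.

Definition Uq : 'M[C]_5 := \matrix_(r < 5, c < 5) ((r == c) && (0 < r < 4)%N)%:R.
Definition phq : 'M[C]_(5, 3) := \matrix_(r < 5, c < 3) (r == c.+1 :> nat)%:R.


Ltac expand := repeat progress (rewrite ?mxE ?big_ord_recr ?big_ord0 /=).

Ltac fin := rewrite /tau1 /tau1_1 /diag_block3 /M1 /mx3 /Uq /phq /=;
  repeat progress (rewrite ?mxE /=); rewrite ?inordK //=; ring.

Ltac solve_mx := apply/matrixP; let i := fresh "i" in let j := fresh "j" in intros i j; expand; case: i => [[|[|[|[|[|?]]]]] ?]; case: j => [[|[|[|[|[|?]]]]] ?] //; fin.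

Lemma sq1 d f (i : 'I_3) : tau1 d f i *m tau1 d f i = 1%:M.
Proof. case: i => [[|[|[|?]]] ?] //; solve_mx. Qed.

Lemma sq2 d f (i : 'I_3) : tau1_1 d f i *m tau1_1 d f i = 1%:M.
Proof. case: i => [[|[|[|?]]] ?] //; solve_mx. Qed.

Lemma com1 d f : tau1 d f 0 *m tau1 d f 2 = tau1 d f 2 *m tau1 d f 0.
Proof. solve_mx. Qed.

Lemma com2 d f : tau1_1 d f 0 *m tau1_1 d f 2 = tau1_1 d f 2 *m tau1_1 d f 0.
Proof. solve_mx. Qed.

Lemma inv1 d f (i : 'I_3) : Uq *m (tau1 d f i)^T *m Uq = Uq *m (tau1 d f i)^T.
Proof. case: i => [[|[|[|?]]] ?] //; solve_mx. Qed.

Lemma UU : Uq *m Uq = Uq.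
Proof. solve_mx. Qed.

Lemma Uphi : phq *m phq^T = Uq.
Proof. solve_mx. Qed.

Lemma full : phq^T *m (Uq *m phq) = 1%:M.
Proof. solve_mx. Qed.

Lemma intw d f (i : 'I_3) :
  Uq *m ((tau1 d f i)^T *m phq) = Uq *m (phq *m (tau1_1 d f i)^T).
Proof. case: i => [[|[|[|?]]] ?] //; rewrite !mulmxA; solve_mx. Qed.

Theorem theorem3p3 (d f : C) (hf : f != 0) :
  T4_rep (tau1 d f) /\ T4_rep (tau1_1 d f) /\
  mx_subquotient (tau1 d f) (tau1_1 d f).
Proof.
split; [|split].
- split; [move=> i; exact: (mulmx1_unit (sq1 d f i)).1 | exact: sq1 | exact: com1].
- split; [move=> i; exact: (mulmx1_unit (sq2 d f i)).1 | exact: sq2 | exact: com2].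
- exists Uq, 0, phq; split.
  + exact: sub0mx.
  + move=> i; apply/submxP; exists (Uq *m (tau1 d f i)^T); by rewrite inv1.
  + by move=> i; rewrite mul0mx sub0mx.
  + split; first by apply/row_fullP; exists phq^T; exact: full.
    apply/andP; split; last exact: sub0mx.
    apply/rV_subP => v; rewrite sub_capmx => /andP[/submxP[x ->] /sub_kermxP Hk].
    rewrite submx0; apply/eqP.
    have -> : x *m Uq = x *m Uq *m phq *m phq^T by rewrite -[_ *m phq^T]mulmxA Uphi -mulmxA UU.
    by rewrite Hk mul0mx.
  + exact: intw.
Qed.
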